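(* Let $p$ be a prime, $t\ge 1$, and let $(K_n,\alpha)$ be an edge-labeled complete graph over $\mathbb{Z}/p^t\mathbb{Z}$ with ordered edge labels $p^{i_1},\dots,p^{i_{r_n}}$. (1) If $p^{i_{r_n}}\mid\cdots\mid p^{i_2}\mid p^{i_1}\mid p^t$ with $i_{r_n}\ge1$ and $i_1<t$, then the set consisting of $(1,\dots,1)$ and, for $j=2,\dots,n$, the vector with $p^{i_{r_{j-1}+1}}$ at $v_j$ and $0$ elsewhere, is a minimum flow-up generating set of $[\mathbb{Z}/p^t\mathbb{Z}]_{(K_n,\alpha)}$; thus the rank is $n$. (2) If $p^{i_1}\mid p^{i_2}\mid\cdots\mid p^{i_{r_n}}\mid p^t$ with $i_1\ge1$ and $i_{r_n}<t$, then the set consisting of $(1,\dots,1)$ and, for $j=2,\dots,n$, the vector with entries $p^{i_{r_n-(n-j)}}$ at $v_j,\dots,v_n$ and $0$ at $v_1,\dots,v_{j-1}$, is a minimum flow-up generating set of $[\mathbb{Z}/p^t\mathbb{Z}]_{(K_n,\alpha)}$; thus the rank is $n$.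
   Context: A spline on an edge-labeled graph $(G,\alpha)$ over $\mathbb{Z}/m\mathbb{Z}$ (edges labeled by nonzero ideals) is a vector $(f_{v_1},\dots,f_{v_n})\in(\mathbb{Z}/m\mathbb{Z})^n$ with $f_{v_i}-f_{v_j}\in\alpha(v_iv_j)$ for every edge; the splines form a $\mathbb{Z}$-module $[\mathbb{Z}/m\mathbb{Z}]_{(G,\alpha)}$. An $i$-th flow-up class is a spline with $f_{v_i}\ne0$ and $f_{v_t}=0$ for $t<i$. A minimum flow-up generating set is a generating set of the $\mathbb{Z}$-module of smallest possible size (the rank) consisting of flow-up classes. $K_n$ is the complete graph on $v_1,\dots,v_n$; $r_k=k(k-1)/2$; for $1\le j<k\le n$ the edge $v_jv_k$ is $e_{r_{k-1}+j}$. ''Ordered edge labels $l_1,\dots,l_{r_n}$'' means $\alpha(e_s)$ is the ideal generated by $l_s+m\mathbb{Z}$. *)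

(* Defs.v *)
From HB Require Import structures.
From mathcomp Require Import all_boot all_order all_algebra.
Set Implicit Arguments. Unset Strict Implicit. Unset Printing Implicit Defensive.
Import Order.TTheory GRing.Theory Num.Theory.
Local Open Scope ring_scope.

Definition rr (k : nat) : nat := ((k * (k - 1)) %/ 2)%N.

(* Vertices v_1..v_n are represented by j : 'I_n (v_{j+1}).
   For 0-indexed j < k, the edge v_{j+1} v_{k+1} is e_{r_k + (j+1)}. *)
Definition edge_index (j k : nat) : nat := (rr k + j.+1)%N.

Definition in_ideal (m : nat) (l x : 'Z_m) : Prop := exists y : 'Z_m, x = y * l.

Definition is_spline (m n : nat) (lab : nat -> 'Z_m) (f : {ffun 'I_n -> 'Z_m}) : Prop :=
  forall j k : 'I_n, (j < k)%N -> in_ideal (lab (edge_index j k)) (f j - f k).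

Definition is_flowup (m n : nat) (f : {ffun 'I_n -> 'Z_m}) : Prop :=
  exists i : 'I_n, f i != 0 /\ forall k : 'I_n, (k < i)%N -> f k = 0.

Definition in_Zspan (m n : nat) (S : {set {ffun 'I_n -> 'Z_m}}) (f : {ffun 'I_n -> 'Z_m}) : Prop :=
  exists c : {ffun 'I_n -> 'Z_m} -> int, f = \sum_(g in S) g *~ c g.

Definition spline_gen_set (m n : nat) (lab : nat -> 'Z_m) (S : {set {ffun 'I_n -> 'Z_m}}) : Prop :=
  (forall g, g \in S -> is_spline lab g) /\
  (forall f, is_spline lab f -> in_Zspan S f).

Definition min_flowup_gen_set (m n : nat) (lab : nat -> 'Z_m) (S : {set {ffun 'I_n -> 'Z_m}}) : Prop :=
  [/\ spline_gen_set lab S,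
      (forall g, g \in S -> is_flowup g) &
      (forall T : {set {ffun 'I_n -> 'Z_m}}, spline_gen_set lab T -> (#|S| <= #|T|)%N)].

Definition plabels (p t : nat) (i : nat -> nat) : nat -> 'Z_(p ^ t) :=
  fun s => ((p ^ i s)%N)%:R.

Definition ones_vec (m n : nat) : {ffun 'I_n -> 'Z_m} := [ffun=> 1].

(* part (1): p^{i_{r_{j-1}+1}} at v_j (1-indexed j), 0 elsewhere *)
Definition gen1 (p t n : nat) (i : nat -> nat) (j : 'I_n) : {ffun 'I_n -> 'Z_(p ^ t)} :=
  [ffun k : 'I_n => if k == j then ((p ^ i (rr j + 1))%N)%:R else 0].

(* part (2): p^{i_{r_n-(n-j)}} at v_j..v_n (1-indexed j), 0 at v_1..v_{j-1} *)
Definition gen2 (p t n : nat) (i : nat -> nat) (j : 'I_n) : {ffun 'I_n -> 'Z_(p ^ t)} :=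
  [ffun k : 'I_n => if (j <= k)%N then ((p ^ i (rr n - (n - j.+1)))%N)%:R else 0].

Definition genset1 (p t n : nat) (i : nat -> nat) : {set {ffun 'I_n -> 'Z_(p ^ t)}} :=
  ones_vec _ n |: [set gen1 p t i j | j : 'I_n & (0 < j)%N].

Definition genset2 (p t n : nat) (i : nat -> nat) : {set {ffun 'I_n -> 'Z_(p ^ t)}} :=
  ones_vec _ n |: [set gen2 p t i j | j : 'I_n & (0 < j)%N].

(* Main.v *)
Require Import Defs.
From mathcomp Require Import all_boot all_order all_algebra.
From mathcomp Require Import zify.
Set Implicit Arguments. Unset Strict Implicit. Unset Printing Implicit Defensive.
Import Order.TTheory GRing.Theory Num.Theory.
Local Open Scope ring_scope.

Section Arith.
Variables (p t : nat).
Hypothesis (pp : prime p) (t1 : (1 <= t)%N).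

Lemma p_gt1 : (1 < p)%N. Proof. exact: prime_gt1. Qed.
Lemma m_gt1 : (1 < p ^ t)%N.
Proof. by rewrite -(expn0 p) ltn_exp2l ?p_gt1. Qed.

Lemma ZpE (x : 'Z_(p ^ t)) : x = (nat_of_ord x)%:R.
Proof. by rewrite natr_Zp. Qed.

Lemma valZ k : nat_of_ord (k%:R : 'Z_(p ^ t)) = (k %% p ^ t)%N.
Proof. by rewrite val_Zp_nat // m_gt1. Qed.

Lemma ideal_dvd a (x : 'Z_(p ^ t)) : (a <= t)%N ->
  in_ideal ((p ^ a)%:R) x <-> (p ^ a %| nat_of_ord x)%N.
Proof.
move=> at_; split.
  case=> y ->; rewrite (ZpE y) -natrM valZ /dvdn modn_dvdm ?dvdn_exp2l //.
  by rewrite modnMl.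
move=> d; exists ((nat_of_ord x %/ p ^ a)%:R); by rewrite -natrM divnK // -ZpE.
Qed.

Definition psi a (x : 'Z_(p ^ t)) : 'Z_p := ((nat_of_ord x %/ p ^ a)%N)%:R.

Lemma psiM a u : (a < t)%N -> psi a ((p ^ a * u)%:R) = u%:R.
Proof.
move=> at_; rewrite /psi valZ -(subnKC (ltnW at_)) expnD -muln_modr mulKn ?expn_gt0 ?prime_gt0 //.
apply: val_inj; rewrite /= !val_Zp_nat ?p_gt1 //.
rewrite modn_dvdm // ?dvdn_exp2l // ?(dvdn_exp2l p (_ : 1 <= t - a)%N) //; try lia.
Qed.

Lemma psiD a (x y : 'Z_(p ^ t)) : (a < t)%N -> (p ^ a %| nat_of_ord x)%N -> (p ^ a %| nat_of_ord y)%N ->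
  psi a (x + y) = psi a x + psi a y.
Proof.
move=> at_ /dvdnP [u hu] /dvdnP [v hv].
rewrite (ZpE x) (ZpE y) hu hv -natrD -mulnDl !(mulnC _ (p ^ a)%N) !psiM //.
by rewrite natrD.
Qed.

Lemma psi0 a : psi a 0 = 0.
Proof. by rewrite /psi /= div0n. Qed.

Lemma pow_neq0 a : (a < t)%N -> ((p ^ a)%:R : 'Z_(p ^ t)) != 0.
Proof.
move=> at_; apply/eqP => /(congr1 (@nat_of_ord _)); rewrite valZ /= modn_small ?ltn_exp2l ?p_gt1 //.
by move/eqP; rewrite expn_eq0 eqn0Ngt prime_gt0.
Qed.

Lemma ideal_pow a b : (a <= b)%N -> in_ideal ((p ^ a)%:R : 'Z_(p ^ t)) ((p ^ b)%:R).
Proof. move=> ab; exists ((p ^ (b - a))%:R); by rewrite -natrM -expnD subnK. Qed.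

End Arith.

Lemma ideal0 m (l : 'Z_m) : in_ideal l 0.
Proof. by exists 0; rewrite mul0r. Qed.
Lemma idealN m (l x : 'Z_m) : in_ideal l x -> in_ideal l (- x).
Proof. by case=> y ->; exists (- y); rewrite mulNr. Qed.
Lemma idealD m (l x y : 'Z_m) : in_ideal l x -> in_ideal l y -> in_ideal l (x + y).
Proof. by case=> a -> [b ->]; exists (a + b); rewrite mulrDl. Qed.
Lemma idealMl m (l c x : 'Z_m) : in_ideal (c * l) x -> in_ideal l x.
Proof. by case=> a ->; exists (a * c); rewrite mulrA. Qed.


Section Count.
Variables (p m n N : nat).
Local Notation V := {ffun 'I_n -> 'Z_m}.
Local Notation W := {ffun 'I_n -> 'Z_p}.
Variables (P : V -> Prop) (phi : V -> W) (T : {set V}).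
Hypotheses (pp : prime p) (N0 : (0 < N)%N) (HN : forall x : V, x *+ N = 0)
  (P0 : P 0) (PD : forall x y, P x -> P y -> P (x + y))
  (phi0 : phi 0 = 0) (phiD : forall x y, P x -> P y -> phi (x + y) = phi x + phi y)
  (Hsurj : forall w, exists2 x, P x & phi x = w)
  (HT : forall g, g \in T -> P g) (Hspan : forall f, P f -> in_Zspan T f).

Definition krep (z : int) : nat :=
  match z with Posz k => k | Negz k => (N * k.+1 - k.+1)%N end.

Lemma krepP (z : int) (x : V) : x *~ z = x *+ krep z.
Proof.
case: z => [k|k] //=; rewrite NegzE mulrNz -pmulrn.
apply/eqP; rewrite eq_sym -subr_eq0 opprK -mulrnDr subnK ?leq_pmull //.
by rewrite mulrnA HN mul0rn.
Qed.

Lemma PMn x k : P x -> P (x *+ k) /\ phi (x *+ k) = phi x *+ k.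
Proof.
move=> Px; elim: k => [|k [IH1 IH2]]; first by rewrite !mulr0n.
by rewrite !mulrS; split; [apply: PD | rewrite phiD // IH2].
Qed.

Lemma Psum (I : Type) (r : seq I) (G : I -> V) (k : I -> nat) :
  (forall x, P (G x)) ->
  P (\sum_(x <- r) G x *+ k x) /\ phi (\sum_(x <- r) G x *+ k x) = \sum_(x <- r) phi (G x) *+ k x.
Proof.
move=> HG; elim: r => [|a r [IH1 IH2]]; first by rewrite !big_nil.
have [h1 h2] := PMn (k a) (HG a).
by rewrite !big_cons; split; [apply: PD | rewrite phiD // IH2 h2].
Qed.

Lemma charW (w : W) k : w *+ k = w *+ (k %% p).
Proof.
have wp : w *+ p = 0.
  apply/ffunP => j; rewrite ffunMnE ffunE -mulr_natr.
  have -> : (p%:R : 'Z_p) = 0 by apply: val_inj; rewrite /= val_Zp_nat ?prime_gt1 // modnn.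
  by rewrite mulr0.
by rewrite {1}(divn_eq k p) mulrnDr mulnC mulrnA wp mul0rn add0r.
Qed.

Lemma count_lb : (n <= #|T|)%N.
Proof.
pose h (d : {ffun 'I_#|T| -> 'I_p}) : W := \sum_(x < #|T|) phi (enum_val x) *+ d x.
have sub : [set: W] \subset [set h d | d in [set: {ffun 'I_#|T| -> 'I_p}]].
  apply/subsetP => w _; have [f Pf <-] := Hsurj w.
  have [c ->] := Hspan Pf.
  apply/imsetP.
  exists [ffun x => Ordinal (ltn_pmod (krep (c (enum_val x))) (prime_gt0 pp))]; first by rewrite inE.
  under eq_bigr do rewrite krepP.
  rewrite big_enum_val.
  set A := (X in enum_val (A := X)).
  have HA : forall x : 'I_#|T|, P (enum_val (A := A) x) by move=> x; apply: HT; exact: (enum_valP x).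
  have [_ ->] := Psum (index_enum _) (G := fun x : 'I_#|A| => enum_val (A := A) x) (fun x : 'I_#|A| => krep (c (enum_val (A := A) x))) HA.
  by rewrite /h; apply: eq_bigr => x _; rewrite ffunE /= -charW.
have := subset_leq_card sub.
move/leq_trans/(_ (leq_imset_card _ _)).
rewrite cardsT !card_ffun !card_ord Zp_cast ?prime_gt1 //.
by rewrite cardsT card_ffun !card_ord leq_exp2l ?prime_gt1.

Qed.
End Count.


Lemma spline0 m (n : nat) (lab : nat -> 'Z_m) : is_spline lab (0 : {ffun 'I_n -> 'Z_m}).
Proof. by move=> j k _; rewrite !ffunE subrr; apply: ideal0. Qed.

Lemma splineD m n (lab : nat -> 'Z_m) (f g : {ffun 'I_n -> 'Z_m}) :
  is_spline lab f -> is_spline lab g -> is_spline lab (f + g).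
Proof.
move=> hf hg j k jk; rewrite !ffunE opprD addrACA; apply: idealD; [exact: hf|exact: hg].
Qed.

Section Gen.
Variables (p t n : nat).
Hypotheses (pp : prime p) (t1 : (1 <= t)%N).
Local Notation V := {ffun 'I_n -> 'Z_(p ^ t)}.
Variables (lab : nat -> 'Z_(p ^ t)) (par : 'I_n -> 'I_n) (e : 'I_n -> nat) (G : 'I_n -> V).

Definition D (f : V) (k : 'I_n) : 'Z_(p ^ t) :=
  f k - (if nat_of_ord k == 0%N then 0 else f (par k)).

Hypotheses (Hpar : forall j : 'I_n, (0 < j)%N -> (par j < j)%N)
  (He : forall j, (e j < t)%N)
  (HDG : forall j k, D (G j) k = if k == j then (p ^ e k)%:R else 0)
  (HGs : forall j, is_spline lab (G j))
  (HDf : forall f, is_spline lab f -> forall k, (p ^ e k %| nat_of_ord (D f k))%N).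

Lemma Dinv (f : V) k : f k = D f k + (if nat_of_ord k == 0%N then 0 else f (par k)).
Proof. by rewrite subrK. Qed.

Lemma Dinj (f g : V) : (forall k, D f k = D g k) -> f = g.
Proof.
move=> h; apply/ffunP => k.
suff H : forall N (k : 'I_n), (k < N)%N -> f k = g k by exact: (H k.+1).
elim=> [//|N IH] {}k kN; rewrite Dinv [RHS]Dinv h.
case: eqP => [//|/eqP k0]; rewrite IH //.
have := Hpar (j:=k); rewrite lt0n k0 => /(_ isT); lia.
Qed.

Lemma DD (f g : V) k : D (f + g) k = D f k + D g k.
Proof. rewrite /D !ffunE; case: eqP => _; first by rewrite !subr0. by rewrite opprD addrACA. Qed.

Lemma D0 k : D 0 k = 0.
Proof. by rewrite /D !ffunE; case: eqP => _; rewrite ?ffunE subrr. Qed.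

Lemma DMn (f : V) c k : D (f *+ c) k = D f k *+ c.
Proof.
elim: c => [|c IH]; first by rewrite !mulr0n D0.
by rewrite !mulrS DD IH.
Qed.

Lemma Dsum (c : 'I_n -> nat) k :
  D (\sum_j G j *+ c j) k = ((p ^ e k * c k)%N)%:R.
Proof.
rewrite (big_morph (fun f => D f k) (fun f g => DD f g k) (D0 k)).
rewrite (bigD1 k) //= big1 ?addr0.
  by rewrite DMn HDG eqxx natrM mulr_natr.
by move=> j /negPf jk; rewrite DMn HDG eq_sym jk mul0rn.
Qed.

Lemma Gsum_spline (c : 'I_n -> nat) : is_spline lab (\sum_j G j *+ c j).
Proof.
apply: (big_ind (is_spline lab)); [exact: spline0| exact: splineD|].
move=> j _; elim: (c j) => [|k IH]; first by rewrite mulr0n; exact: spline0.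
by rewrite mulrS; apply: splineD.
Qed.

Lemma recon (f : V) : is_spline lab f ->
  f = \sum_j G j *+ (nat_of_ord (D f j) %/ p ^ e j)%N.
Proof.
move=> hf; apply: Dinj => k; rewrite Dsum mulnC divnK ?HDf //.
by rewrite -ZpE.
Qed.

Lemma Gzero (j k : 'I_n) : (k < j)%N -> G j k = 0.
Proof.
suff H : forall N (k : 'I_n), (k < N)%N -> (k < j)%N -> G j k = 0 by exact: (H k.+1).
elim=> [//|N IH] {}k kN kj; rewrite Dinv HDG.
have -> : (k == j) = false by apply/negP => /eqP kj'; rewrite kj' ltnn in kj.
case: eqP => [_|/eqP k0]; rewrite ?addr0 // add0r IH //.
  have := Hpar (j:=k); rewrite lt0n k0 => /(_ isT); lia.
have := Hpar (j:=k); rewrite lt0n k0 => /(_ isT); lia.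
Qed.

Lemma Gdiag (j : 'I_n) : G j j = (p ^ e j)%:R.
Proof.
rewrite Dinv HDG eqxx; case: eqP => [_|/eqP k0]; rewrite ?addr0 // Gzero ?addr0 //.
by apply: Hpar; rewrite lt0n.
Qed.

Lemma Gflow (j : 'I_n) : is_flowup (G j).
Proof.
exists j; split; first by rewrite Gdiag (pow_neq0 pp t1 (He j)).
by move=> k; apply: Gzero.
Qed.

Lemma Ginj : injective G.
Proof.
move=> j k hjk; have := HDG j j; rewrite hjk HDG eqxx.
case: eqP => // _ /eqP; rewrite eq_sym (negPf (pow_neq0 pp t1 (He j))) //.
Qed.

Definition phiG (f : V) : {ffun 'I_n -> 'Z_p} := [ffun k => psi (e k) (D f k)].

Lemma gen_main (S : {set V}) : S = G @: [set: 'I_n] ->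
  min_flowup_gen_set lab S /\ #|S| = n.
Proof.
move=> ->.
have cardS : #|G @: [set: 'I_n]| = n by rewrite card_imset ?cardsT ?card_ord //; exact: Ginj.
split=> //; split.
- split; first by move=> g /imsetP [j _ ->].
  move=> f /recon ->.
  pose c (g : V) : int := Posz (\sum_(j | G j == g) (nat_of_ord (D f j) %/ p ^ e j))%N.
  exists c; rewrite big_imset /=; last by move=> x y _ _; apply: Ginj.
  apply: eq_big => [j|j _]; first by rewrite inE.
  rewrite /c -pmulrn; congr (_ *+ _).
  rewrite (big_pred1 j) // => k /=; apply/eqP/eqP => [/Ginj|->] //.
- by move=> g /imsetP [j _ ->]; exact: Gflow.
- move=> T [HT Hspan]; rewrite cardS.
  apply: (@count_lb p (p ^ t) n (p ^ t) (is_spline lab) phiG T pp).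
  + by rewrite expn_gt0 prime_gt0.
  + move=> x; apply/ffunP => k; rewrite ffunMnE ffunE -mulr_natr.
    have -> : ((p ^ t)%:R : 'Z_(p ^ t)) = 0.
      by apply: val_inj; rewrite /= (valZ pp t1) modnn.
    by rewrite mulr0.
  + exact: spline0.
  + by move=> x y; apply: splineD.
  + by apply/ffunP => k; rewrite !ffunE D0 psi0.
  + move=> x y hx hy; apply/ffunP => k; rewrite !ffunE DD psiD //; exact: HDf.
  + move=> w; exists (\sum_j G j *+ nat_of_ord (w j)); first exact: Gsum_spline.
    apply/ffunP => k; rewrite ffunE Dsum psiM //.
    by rewrite natr_Zp.
  + exact: HT.
  + exact: Hspan.
Qed.

End Gen.


Lemma rrE k : rr k = 'C(k, 2).
Proof. by rewrite /rr bin2 -divn2 subn1. Qed.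
Lemma rrS k : rr k.+1 = (rr k + k)%N.
Proof. by rewrite !rrE binS bin1 addnC. Qed.
Lemma rr_mono a b : (a <= b)%N -> (rr a <= rr b)%N.
Proof. by rewrite !rrE => h; apply: leq_bin2l. Qed.

Section Case1.
Variables (p t n : nat) (i : nat -> nat).
Hypotheses (pp : prime p) (t1 : (1 <= t)%N).
Hypothesis Hdec : forall s, (1 <= s < rr n)%N -> (i s.+1 <= i s)%N.
Hypothesis Hi1 : (i 1 < t)%N.

Lemma mono1 s s' : (1 <= s)%N -> (s <= s')%N -> (s' <= rr n)%N -> (i s' <= i s)%N.
Proof.
move=> h1 h2; elim: s' h2 => [|s' IH]; first by lia.
rewrite leq_eqVlt => /orP [/eqP <- //|h3 h4].
apply: leq_trans (IH h3 (ltnW h4)); apply: Hdec; lia.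
Qed.

Lemma idx_bound (a b : nat) : (a < b)%N -> (b < n)%N -> (rr b + a.+1 <= rr n)%N.
Proof.
move=> ab bn; have := rr_mono bn; rewrite rrS; lia.
Qed.

Definition par1 (j : 'I_n) : 'I_n := Ordinal (leq_ltn_trans (leq0n j) (ltn_ord j)).
Definition e1 (j : 'I_n) : nat := if nat_of_ord j == 0%N then 0%N else i (rr j + 1).
Definition G1 (j : 'I_n) : {ffun 'I_n -> 'Z_(p ^ t)} :=
  if nat_of_ord j == 0%N then ones_vec _ n else gen1 p t i j.

Lemma e1_lt j : (e1 j < t)%N.
Proof.
rewrite /e1; case: eqP => [_|/eqP j0]; first by lia.
have hj : (0 < j)%N by rewrite lt0n.
have := idx_bound hj (ltn_ord j) => hb.
apply: leq_ltn_trans Hi1; apply: mono1; lia.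
Qed.

Lemma HDG1 j k : D par1 (G1 j) k = if k == j then (p ^ e1 k)%:R else 0.
Proof.
rewrite /D /G1 /e1 /ones_vec /gen1.
case: (eqVneq (nat_of_ord j) 0%N) => j0; case: (eqVneq (nat_of_ord k) 0%N) => k0;
  rewrite !ffunE /=.
- have -> : k == j by apply/eqP/val_inj; rewrite /= j0 k0.
  by rewrite expn0 subr0.
- have -> : (k == j) = false by apply/eqP => /(congr1 (@nat_of_ord _)); lia.
  by rewrite subrr.
- have -> : (k == j) = false by apply/eqP => /(congr1 (@nat_of_ord _)); lia.
  by rewrite subr0.
- have -> : (par1 k == j) = false by apply/eqP => /(congr1 (@nat_of_ord _)) /=; lia.
  rewrite subr0; case: eqP => [->|//]; by [].
Qed.

Lemma HDf1 f : is_spline (plabels p t i) f -> forall k, (p ^ e1 k %| nat_of_ord (D par1 f k))%N.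
Proof.
move=> hf k; rewrite /e1; case: eqP => [_|/eqP k0]; first by rewrite expn0 dvd1n.
have hk : (par1 k < k)%N by rewrite /= lt0n.
have := hf _ _ hk; rewrite /edge_index /plabels /= => /idealN; rewrite opprB.
move/(ideal_dvd pp t1) => H; rewrite /D (negPf k0); apply: H.
apply: ltnW; have := e1_lt k; by rewrite /e1 (negPf k0) addn1.
Qed.

Lemma HGs1 j : is_spline (plabels p t i) (G1 j).
Proof.
move=> a b ab; rewrite /G1 /ones_vec /gen1 /plabels /edge_index.
case: eqP => [_|/eqP j0]; first by rewrite !ffunE subrr; apply: ideal0.
have hb := idx_bound ab (ltn_ord b).
rewrite !ffunE; case: (eqVneq a j) => [aj|aj]; case: (eqVneq b j) => [bj|bj].
- by rewrite aj bj ltnn in ab.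
- rewrite subr0; apply: ideal_pow; apply: mono1; rewrite -?aj; try lia.
  by have := rr_mono (ltnW ab); lia.
- rewrite sub0r; apply: idealN; apply: ideal_pow; apply: mono1; rewrite -?bj; lia.
- by rewrite subrr; apply: ideal0.
Qed.

Lemma genset1E : (1 <= n)%N -> genset1 p t n i = G1 @: [set: 'I_n].
Proof.
move=> n1; apply/setP => g; rewrite in_setU1; apply/idP/imsetP.
- case/orP => [/eqP ->|/imsetP [j hj ->]].
    by exists (Ordinal n1); rewrite ?inE // /G1.
  exists j; rewrite ?inE // /G1; move: hj; rewrite inE lt0n => /negPf -> //.
- case=> j _ ->; rewrite /G1; have [j0|j0] := eqVneq (nat_of_ord j) 0%N.
    by rewrite eqxx.
  rewrite ?(negPf j0); apply/orP; right; apply/imsetP; exists j => //; rewrite inE lt0n.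
  exact: j0.
Qed.

Lemma case1 : (1 <= n)%N ->
  min_flowup_gen_set (plabels p t i) (genset1 p t n i) /\ #|genset1 p t n i| = n.
Proof.
move=> n1; apply: (gen_main pp t1 (par := par1) (e := e1) (G := G1)).
- by move=> j; rewrite /= lt0n.
- exact: e1_lt.
- exact: HDG1.
- exact: HGs1.
- exact: HDf1.
- exact: genset1E.
Qed.
End Case1.


Section Case2.
Variables (p t n : nat) (i : nat -> nat).
Hypotheses (pp : prime p) (t1 : (1 <= t)%N) (n1 : (1 <= n)%N).
Hypothesis Hinc : forall s, (1 <= s < rr n)%N -> (i s <= i s.+1)%N.
Hypothesis Hin : (i (rr n) < t)%N.

Lemma mono2 s s' : (1 <= s)%N -> (s <= s')%N -> (s' <= rr n)%N -> (i s <= i s')%N.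
Proof.
move=> h1 h2; elim: s' h2 => [|s' IH]; first by lia.
rewrite leq_eqVlt => /orP [/eqP <- //|h3 h4].
apply: leq_trans (IH h3 (ltnW h4)) _; apply: Hinc; lia.
Qed.

Lemma rrn : rr n = (rr n.-1 + n.-1)%N.
Proof. by rewrite -rrS prednK. Qed.

Lemma idx2 (j : nat) : (j < n)%N -> (rr n - (n - j.+1))%N = (rr n.-1 + j)%N.
Proof. move=> jn; have := rrn; lia. Qed.

Definition par2 (j : 'I_n) : 'I_n := Ordinal (leq_ltn_trans (leq_pred j) (ltn_ord j)).
Definition lastv : 'I_n := @Ordinal n n.-1 (eq_ind_r is_true n1 (ltn_predL n)).
Definition e2 (j : 'I_n) : nat := if nat_of_ord j == 0%N then 0%N else i (rr n - (n - j.+1)).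
Definition G2 (j : 'I_n) : {ffun 'I_n -> 'Z_(p ^ t)} :=
  if nat_of_ord j == 0%N then ones_vec _ n else gen2 p t i j.

Lemma e2_lt j : (e2 j < t)%N.
Proof.
rewrite /e2; case: eqP => [_|/eqP j0]; first by lia.
have jn := ltn_ord j; have jp : (0 < j)%N by rewrite lt0n.
rewrite idx2 //; apply: leq_ltn_trans Hin; apply: mono2; have := rrn; lia.
Qed.

Lemma HDG2 j k : D par2 (G2 j) k = if k == j then (p ^ e2 k)%:R else 0.
Proof.
rewrite /D /G2 /e2 /ones_vec /gen2.
case: (eqVneq (nat_of_ord j) 0%N) => j0; case: (eqVneq (nat_of_ord k) 0%N) => k0;
  rewrite !ffunE /=.
- have -> : k == j by apply/eqP/val_inj; rewrite /= j0 k0.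
  by rewrite expn0 subr0.
- have -> : (k == j) = false by apply/eqP => /(congr1 (@nat_of_ord _)); lia.
  by rewrite subrr.
- have -> : (k == j) = false by apply/eqP => /(congr1 (@nat_of_ord _)); lia.
  have -> : (j <= k)%N = false by lia.
  by rewrite subr0.
- have [kj|kj|kj] := ltngtP k j.
  + have h1 : (k == j) = false by apply/eqP => /(congr1 (@nat_of_ord _)); lia.
    have h2 : (j <= k)%N = false by lia.
    have h3 : (j <= k.-1)%N = false by lia.
    by rewrite ?h1 ?h2 ?h3 subrr.
  + have h1 : (k == j) = false by apply/eqP => /(congr1 (@nat_of_ord _)); lia.
    have h2 : (j <= k)%N by lia.
    have h3 : (j <= k.-1)%N by lia.
    by rewrite ?h1 ?h2 ?h3 subrr.
  + have h1 : k == j by apply/eqP/val_inj.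
    have h2 : (j <= k)%N by lia.
    have h3 : (j <= k.-1)%N = false by lia.
    by rewrite ?h1 ?h2 ?h3 subr0 kj.
Qed.

Lemma ideal_mono a b (x : 'Z_(p ^ t)) : (a <= b)%N ->
  in_ideal ((p ^ b)%:R) x -> in_ideal ((p ^ a)%:R) x.
Proof.
move=> ab h; apply: (@idealMl _ _ ((p ^ (b - a))%:R)).
by rewrite -natrM -expnD subnK.
Qed.

Lemma HDf2 f : is_spline (plabels p t i) f -> forall k, (p ^ e2 k %| nat_of_ord (D par2 f k))%N.
Proof.
move=> hf k; rewrite /e2; case: eqP => [_|/eqP k0]; first by rewrite expn0 dvd1n.
rewrite /D (negPf k0).
have kn := ltn_ord k.
apply/(ideal_dvd pp t1); first by have := e2_lt k; rewrite /e2 (negPf k0); lia.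
rewrite idx2 //.
have h1 : in_ideal ((p ^ i (rr n.-1 + k))%:R) (f (par2 k) - f lastv).
  have hk : (par2 k < lastv)%N by rewrite /=; lia.
  have := hf _ _ hk; rewrite /edge_index /plabels /=.
  by have -> : (rr n.-1 + k.-1.+1 = rr n.-1 + k)%N by lia.
have [kl|kl] := ltnP k n.-1.
  have hk : (k < lastv)%N by [].
  have := hf _ _ hk; rewrite /edge_index /plabels /= => h2.
  have -> : f k - f (par2 k) = (f k - f lastv) - (f (par2 k) - f lastv).
    by rewrite opprB addrA subrK.
  apply: idealD; last by apply: idealN.
  apply: ideal_mono h2; apply: mono2; have := rrn; lia.
have ek : k = lastv by apply: val_inj => /=; lia.
rewrite -opprB (_ : f k = f lastv); first exact: idealN h1.
by rewrite ek.
Qed.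

Lemma HGs2 j : is_spline (plabels p t i) (G2 j).
Proof.
move=> a b ab; rewrite /G2 /ones_vec /gen2 /plabels /edge_index.
case: eqP => [_|/eqP j0]; first by rewrite !ffunE subrr; apply: ideal0.
have bn := ltn_ord b.
rewrite !ffunE; case: (leqP j a) => ja.
  by rewrite (leq_trans ja (ltnW ab)) subrr; apply: ideal0.
case: (leqP j b) => jb; last by rewrite subrr; apply: ideal0.
rewrite sub0r; apply: idealN; apply: ideal_pow; rewrite idx2 //.
have hr : (rr b + a.+1 <= rr n.-1 + j)%N.
  case: (ltnP b.+1 n) => bn1.
    have := rr_mono (_ : b.+1 <= n.-1)%N; rewrite rrS => h; have := h ltac:(lia); lia.
  have -> : b = n.-1 :> nat by lia.
  lia.
apply: mono2; have := rrn; lia.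
Qed.

Lemma genset2E : genset2 p t n i = G2 @: [set: 'I_n].
Proof.
apply/setP => g; rewrite in_setU1; apply/idP/imsetP.
- case/orP => [/eqP ->|/imsetP [j hj ->]].
    by exists (Ordinal n1); rewrite ?inE // /G2.
  exists j; rewrite ?inE // /G2; move: hj; rewrite inE lt0n => /negPf -> //.
- case=> j _ ->; rewrite /G2; have [j0|j0] := eqVneq (nat_of_ord j) 0%N.
    by rewrite eqxx.
  rewrite ?(negPf j0); apply/orP; right; apply/imsetP; exists j => //; rewrite inE lt0n.
  exact: j0.
Qed.

Lemma case2 :
  min_flowup_gen_set (plabels p t i) (genset2 p t n i) /\ #|genset2 p t n i| = n.
Proof.
apply: (gen_main pp t1 (par := par2) (e := e2) (G := G2)).
- by move=> j; rewrite /= => h; lia.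
- exact: e2_lt.
- exact: HDG2.
- exact: HGs2.
- exact: HDf2.
- exact: genset2E.
Qed.
End Case2.


Local Close Scope ring_scope.
Unset Implicit Arguments.

Theorem mainTheorem8 (p t n : nat) (i : nat -> nat) :
  prime p -> (1 <= t)%N -> (2 <= n)%N ->
  (* (1) *)
  ((forall s, (1 <= s < rr n)%N -> (p ^ i s.+1 %| p ^ i s)%N) ->
   (p ^ i 1 %| p ^ t)%N -> (1 <= i (rr n))%N -> (i 1 < t)%N ->
   min_flowup_gen_set (plabels p t i) (genset1 p t n i) /\ #|genset1 p t n i| = n)
  /\
  (* (2) *)
  ((forall s, (1 <= s < rr n)%N -> (p ^ i s %| p ^ i s.+1)%N) ->
   (p ^ i (rr n) %| p ^ t)%N -> (1 <= i 1)%N -> (i (rr n) < t)%N ->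
   min_flowup_gen_set (plabels p t i) (genset2 p t n i) /\ #|genset2 p t n i| = n).
Proof.
move=> pp t1 n2; have n1 : (1 <= n)%N by apply: leq_trans n2.
split.
- move=> Hd _ _ Hi1; apply: (case1 pp t1) => //.
  by move=> s hs; rewrite -(dvdn_Pexp2l _ _ (prime_gt1 pp)); apply: Hd.
- move=> Hd _ _ Hi1; apply: (case2 pp t1 n1) => //.
  by move=> s hs; rewrite -(dvdn_Pexp2l _ _ (prime_gt1 pp)); apply: Hd.
Qed.
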